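(* Let $\mathcal A,\mathcal B$ be categories with equalizers and $(\mathcal T,(N_A,R_A),(N_B,R_B),\tau)$ a regular pre-torsor. Let $(C,i)$ be the equalizer of $\omega^l=(R_AN_BR_BN_AR_A\epsilon^BN_A)\circ(\tau R_BN_A)$ and $\omega^r=R_AN_BR_BN_A\eta^A$, with comonad structure $\Delta^C,\varepsilon^C$ determined by $(ii)\circ\Delta^C=(\tau R_BN_A)\circ i$ (where $ii=(R_AN_BR_BN_Ai)\circ(iC)$) and $\eta^A\circ\varepsilon^C=(R_A\epsilon^BN_A)\circ i$; and let $(D,j)$ be the equalizer of $\theta^l=(R_B\epsilon^AN_BR_BN_AR_AN_B)\circ(R_BN_A\tau)$ and $\theta^r=\eta^BR_BN_AR_AN_B$, with comonad structure given by $(jj)\circ\Delta^D=(R_BN_A\tau)\circ j$ and $\eta^B\circ\varepsilon^D=(R_B\epsilon^AN_B)\circ j$. Then the comonads $\mathbb C=(C,\Delta^C,\varepsilon^C)$ on $\mathcal A$ and $\mathbb D=(D,\Delta^D,\varepsilon^D)$ on $\mathcal B$ have equivalent categories of comodules: $\mathcal A^{\mathbb C}\simeq\mathcal B^{\mathbb D}$.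
   Context: Conventions: $\circ$ vertical composition, juxtaposition horizontal composition; a functor's name denotes its identity transformation. Adjunctions $(N_A:\mathcal A\to\mathcal T,R_A)$ and $(N_B:\mathcal B\to\mathcal T,R_B)$ with units $\eta^A,\eta^B$ and counits $\epsilon^A,\epsilon^B$. A pre-torsor is such a pair of adjunctions together with a natural $\tau:R_AN_B\to R_AN_BR_BN_AR_AN_B$ satisfying $(R_AN_BR_B\epsilon^AN_B)\circ\tau=R_AN_B\eta^B$, $(R_A\epsilon^BN_AR_AN_B)\circ\tau=\eta^AR_AN_B$, $(R_AN_BR_BN_A\tau)\circ\tau=(\tau R_BN_AR_AN_B)\circ\tau$. It is regular if both adjunctions are regular: an adjunction $(N,R)$ out of a category with equalizers is regular if its unit is a regular natural monomorphism (the equalizer in the functor category of some pair of natural transformations) and $N$ preserves equalizers. Equalizers of natural transformations are taken in the functor category. *)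

(* Defs.v *)
From Stdlib Require Import ProofIrrelevance.
Set Implicit Arguments.
Unset Strict Implicit.

Record Category := {
  ob :> Type;
  hom : ob -> ob -> Type;
  idm : forall a, hom a a;
  cmp : forall a b c, hom b c -> hom a b -> hom a c;
  cmp_id_l : forall a b (f : hom a b), cmp (idm b) f = f;
  cmp_id_r : forall a b (f : hom a b), cmp f (idm a) = f;
  cmp_assoc : forall a b c d (h : hom c d) (g : hom b c) (f : hom a b),
      cmp h (cmp g f) = cmp (cmp h g) f }.
Arguments hom {c0} a b.
Arguments idm {c0} a.
Arguments cmp {c0 a b c} g f.
Notation "g ∘ f" := (cmp g f) (at level 40, left associativity).

Record Functor (C D : Category) := {
  fobj :> C -> D;
  fmap : forall a b, hom a b -> hom (fobj a) (fobj b);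
  fmap_id : forall a, fmap (idm a) = idm (fobj a);
  fmap_comp : forall a b c (g : hom b c) (f : hom a b),
      fmap (g ∘ f) = fmap g ∘ fmap f }.
Arguments fmap {C D} f0 {a b} _.

Definition Fid (C : Category) : Functor C C.
Proof. refine {| fobj := fun x => x; fmap := fun a b f => f |}; reflexivity. Defined.

Definition Fcomp {C D E : Category} (G : Functor D E) (F : Functor C D) : Functor C E.
Proof.
  refine {| fobj := fun x => G (F x); fmap := fun a b f => fmap G (fmap F f) |}.
  - intro a; rewrite !fmap_id; reflexivity.
  - intros; rewrite !fmap_comp; reflexivity.
Defined.

Record NatTrans {C D : Category} (F G : Functor C D) := {
  ntc :> forall x, hom (F x) (G x);
  ntnat : forall a b (f : hom a b), ntc b ∘ fmap F f = fmap G f ∘ ntc a }.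

Definition IsEqualizer {C : Category} {e x y : C} (m : hom e x) (f g : hom x y) : Prop :=
  f ∘ m = g ∘ m /\
  forall z (k : hom z x), f ∘ k = g ∘ k -> exists! u : hom z e, m ∘ u = k.

Definition HasEqualizers (C : Category) : Prop :=
  forall (x y : C) (f g : hom x y), exists (e : C) (m : hom e x), IsEqualizer m f g.

Definition PreservesEqualizers {C D : Category} (N : Functor C D) : Prop :=
  forall (e x y : C) (m : hom e x) (f g : hom x y),
    IsEqualizer m f g -> IsEqualizer (fmap N m) (fmap N f) (fmap N g).

Definition IsEqualizerNT {C D : Category} {E F G : Functor C D}
  (i : NatTrans E F) (al be : forall x, hom (F x) (G x)) : Prop :=
  (forall x, al x ∘ i x = be x ∘ i x) /\
  forall (X : Functor C D) (k : NatTrans X F),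
    (forall x, al x ∘ k x = be x ∘ k x) ->
    exists u : NatTrans X E,
      (forall x, i x ∘ u x = k x) /\
      (forall u' : NatTrans X E, (forall x, i x ∘ u' x = k x) -> forall x, u' x = u x).

Definition RegularNatMono {C D : Category} {E F : Functor C D} (i : NatTrans E F) : Prop :=
  exists (G : Functor C D) (al be : NatTrans F G), IsEqualizerNT i al be.

Record Adjunction (C D : Category) := {
  adjL : Functor C D;
  adjR : Functor D C;
  unit : NatTrans (Fid C) (Fcomp adjR adjL);
  counit : NatTrans (Fcomp adjL adjR) (Fid D);
  tri_l : forall x : C, counit (adjL x) ∘ fmap adjL (unit x) = idm (adjL x);
  tri_r : forall y : D, fmap adjR (counit y) ∘ unit (adjR y) = idm (adjR y) }.

Definition RegularAdjunction {C D : Category} (adj : Adjunction C D) : Prop :=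
  RegularNatMono (unit adj) /\ PreservesEqualizers (adjL adj).

Section Torsor.
Context {A B T : Category} (adjA : Adjunction A T) (adjB : Adjunction B T).
Local Notation NA := (adjL adjA).
Local Notation RA := (adjR adjA).
Local Notation NB := (adjL adjB).
Local Notation RB := (adjR adjB).
Local Notation etaA := (unit adjA).
Local Notation epsA := (counit adjA).
Local Notation etaB := (unit adjB).
Local Notation epsB := (counit adjB).

Definition PhiA : Functor A A := Fcomp RA (Fcomp NB (Fcomp RB NA)).
Definition PhiB : Functor B B := Fcomp RB (Fcomp NA (Fcomp RA NB)).

Definition TauType : Type :=
  NatTrans (Fcomp RA NB) (Fcomp PhiA (Fcomp RA NB)).

Definition IsPreTorsor (tau : TauType) : Prop :=
  (forall x : B, fmap RA (fmap NB (fmap RB (epsA (NB x)))) ∘ tau x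
                 = fmap RA (fmap NB (etaB x))) /\
  (forall x : B, fmap RA (epsB (NA (RA (NB x)))) ∘ tau x = etaA (RA (NB x))) /\
  (forall x : B, fmap PhiA (tau x) ∘ tau x = tau (RB (NA (RA (NB x)))) ∘ tau x).

Definition IsRegularPreTorsor (tau : TauType) : Prop :=
  IsPreTorsor tau /\ RegularAdjunction adjA /\ RegularAdjunction adjB.

Variable tau : TauType.

Definition omega_l (x : A) : hom (PhiA x) (Fcomp PhiA (Fcomp RA NA) x) :=
  fmap PhiA (fmap RA (epsB (NA x))) ∘ tau (RB (NA x)).
Definition omega_r (x : A) : hom (PhiA x) (Fcomp PhiA (Fcomp RA NA) x) :=
  fmap PhiA (etaA x).

Definition theta_l (x : B) : hom (PhiB x) (Fcomp (Fcomp RB NB) PhiB x) :=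
  fmap RB (epsA (NB (PhiB x))) ∘ fmap RB (fmap NA (tau x)).
Definition theta_r (x : B) : hom (PhiB x) (Fcomp (Fcomp RB NB) PhiB x) :=
  etaB (PhiB x).

Definition ComonadDataC (C : Functor A A) (i : NatTrans C PhiA)
  (DeltaC : NatTrans C (Fcomp C C)) (epsC : NatTrans C (Fid A)) : Prop :=
  (forall x, fmap PhiA (i x) ∘ i (C x) ∘ DeltaC x = tau (RB (NA x)) ∘ i x) /\
  (forall x, etaA x ∘ epsC x = fmap RA (epsB (NA x)) ∘ i x).

Definition ComonadDataD (D : Functor B B) (j : NatTrans D PhiB)
  (DeltaD : NatTrans D (Fcomp D D)) (epsD : NatTrans D (Fid B)) : Prop :=
  (forall x, fmap PhiB (j x) ∘ j (D x) ∘ DeltaD x = fmap RB (fmap NA (tau x)) ∘ j x) /\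
  (forall x, etaB x ∘ epsD x = fmap RB (epsA (NB x)) ∘ j x).
End Torsor.

Section Comodules.
Context {A : Category} (C : Functor A A)
  (Delta : NatTrans C (Fcomp C C)) (eps : NatTrans C (Fid A)).

Record Comodule := {
  cm_ob : A;
  cm_coact : hom cm_ob (C cm_ob);
  cm_coassoc : fmap C cm_coact ∘ cm_coact = Delta cm_ob ∘ cm_coact;
  cm_counit : eps cm_ob ∘ cm_coact = idm cm_ob }.

Definition ComoduleHom (X Y : Comodule) : Type :=
  { f : hom (cm_ob X) (cm_ob Y) | cm_coact Y ∘ f = fmap C f ∘ cm_coact X }.

Lemma comodule_hom_eq (X Y : Comodule) (f g : ComoduleHom X Y) :
  proj1_sig f = proj1_sig g -> f = g.
Proof.
  destruct f as [f pf], g as [g pg]; simpl; intros ->.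
  rewrite (proof_irrelevance _ pf pg); reflexivity.
Qed.

Definition cm_id (X : Comodule) : ComoduleHom X X.
Proof.
  exists (idm (cm_ob X)). rewrite fmap_id, cmp_id_l, cmp_id_r; reflexivity.
Defined.

Definition cm_comp (X Y Z : Comodule) (g : ComoduleHom Y Z) (f : ComoduleHom X Y) :
  ComoduleHom X Z.
Proof.
  exists (proj1_sig g ∘ proj1_sig f).
  destruct g as [g pg], f as [f pf]; simpl.
  rewrite fmap_comp, cmp_assoc, pg, <- cmp_assoc, pf, cmp_assoc; reflexivity.
Defined.

Definition ComoduleCat : Category.
Proof.
  refine {| ob := Comodule; hom := ComoduleHom; idm := cm_id; cmp := cm_comp |}.
  - intros; apply comodule_hom_eq; simpl; apply cmp_id_l.
  - intros; apply comodule_hom_eq; simpl; apply cmp_id_r.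
  - intros; apply comodule_hom_eq; simpl; apply cmp_assoc.
Defined.
End Comodules.

Definition IsIso {C : Category} {a b : C} (f : hom a b) : Prop :=
  exists g : hom b a, g ∘ f = idm a /\ f ∘ g = idm b.

Definition EquivalentCats (C D : Category) : Prop :=
  exists (F : Functor C D) (G : Functor D C)
         (u : NatTrans (Fid C) (Fcomp G F)) (c : NatTrans (Fcomp F G) (Fid D)),
    (forall x, IsIso (u x)) /\ (forall y, IsIso (c y)).

Arguments IsPreTorsor {A B T} adjA adjB tau.
Arguments IsRegularPreTorsor {A B T} adjA adjB tau.
Arguments omega_l {A B T} adjA adjB tau x.
Arguments theta_l {A B T} adjA adjB tau x.
Arguments ComonadDataC {A B T} adjA adjB tau {C} i DeltaC epsC.
Arguments ComonadDataD {A B T} adjA adjB tau {D} j DeltaD epsD.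
Arguments ComoduleCat {A} C Delta eps.

(* Main.v *)
Require Import Defs.
From Stdlib Require Import ClassicalEpsilon ProofIrrelevance Setoid.
Set Implicit Arguments.
Unset Strict Implicit.

Ltac nrm := repeat rewrite <- cmp_assoc.
Ltac nrmin H := repeat rewrite <- cmp_assoc in H.

Section RWL.
Context {C : Category}.
Lemma rw2 {a0 a1 a2 : C} (p : hom a1 a2) (q : hom a0 a1) r :
  p ∘ q = r -> forall e (x : hom e a0), p ∘ (q ∘ x) = r ∘ x.
Proof. intros H e x; rewrite cmp_assoc, H; reflexivity. Qed.
Lemma rw3 {a0 a1 a2 a3 : C} (p : hom a2 a3) (q1 : hom a1 a2) (q2 : hom a0 a1) r :
  p ∘ (q1 ∘ q2) = r -> forall e (x : hom e a0), p ∘ (q1 ∘ (q2 ∘ x)) = r ∘ x.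
Proof. intros H e x; rewrite !cmp_assoc, <- H, !cmp_assoc; reflexivity. Qed.
Lemma rw4 {a0 a1 a2 a3 a4 : C} (p : hom a3 a4) (q1 : hom a2 a3) (q2 : hom a1 a2) (q3 : hom a0 a1) r :
  p ∘ (q1 ∘ (q2 ∘ q3)) = r -> forall e (x : hom e a0), p ∘ (q1 ∘ (q2 ∘ (q3 ∘ x))) = r ∘ x.
Proof. intros H e x; rewrite !cmp_assoc, <- H, !cmp_assoc; reflexivity. Qed.
Lemma rw5 {a0 a1 a2 a3 a4 a5 : C} (p : hom a4 a5) (q1 : hom a3 a4) (q2 : hom a2 a3) (q3 : hom a1 a2) (q4 : hom a0 a1) r :
  p ∘ (q1 ∘ (q2 ∘ (q3 ∘ q4))) = r -> forall e (x : hom e a0), p ∘ (q1 ∘ (q2 ∘ (q3 ∘ (q4 ∘ x)))) = r ∘ x.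
Proof. intros H e x; rewrite !cmp_assoc, <- H, !cmp_assoc; reflexivity. Qed.
Lemma rw6 {a0 a1 a2 a3 a4 a5 a6 : C} (p : hom a5 a6) (q1 : hom a4 a5) (q2 : hom a3 a4) (q3 : hom a2 a3) (q4 : hom a1 a2) (q5 : hom a0 a1) r :
  p ∘ (q1 ∘ (q2 ∘ (q3 ∘ (q4 ∘ q5)))) = r -> forall e (x : hom e a0), p ∘ (q1 ∘ (q2 ∘ (q3 ∘ (q4 ∘ (q5 ∘ x))))) = r ∘ x.
Proof. intros H e x; rewrite !cmp_assoc, <- H, !cmp_assoc; reflexivity. Qed.
Lemma rw7 {a0 a1 a2 a3 a4 a5 a6 a7 : C} (p : hom a6 a7) (q1 : hom a5 a6) (q2 : hom a4 a5) (q3 : hom a3 a4) (q4 : hom a2 a3) (q5 : hom a1 a2) (q6 : hom a0 a1) r :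
  p ∘ (q1 ∘ (q2 ∘ (q3 ∘ (q4 ∘ (q5 ∘ q6))))) = r -> forall e (x : hom e a0), p ∘ (q1 ∘ (q2 ∘ (q3 ∘ (q4 ∘ (q5 ∘ (q6 ∘ x)))))) = r ∘ x.
Proof. intros H e x; rewrite !cmp_assoc, <- H, !cmp_assoc; reflexivity. Qed.
End RWL.

Ltac normid := repeat rewrite fmap_id; repeat rewrite cmp_id_l; repeat rewrite cmp_id_r.
Ltac rw H :=
  let H0 := fresh in
  pose proof H as H0; cbn in H0; repeat rewrite fmap_comp in H0; repeat rewrite fmap_id in H0;
  repeat rewrite cmp_id_l in H0; repeat rewrite cmp_id_r in H0; nrmin H0; cbn; repeat rewrite fmap_comp;
  normid; nrm;
  first [ rewrite (rw7 H0) | rewrite (rw6 H0) | rewrite (rw5 H0) | rewrite (rw4 H0)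
        | rewrite (rw3 H0) | rewrite (rw2 H0) | rewrite H0 ]; clear H0; repeat rewrite fmap_comp;
  normid; nrm.
Ltac rw' H := cbn in *; rw H.
Lemma fmap_comp_r {C D : Category} (F : Functor C D) {a b c : C} {z : D} (g : hom b c) (f : hom a b) (x : hom z (F a)) :
  fmap F g ∘ (fmap F f ∘ x) = fmap F (g ∘ f) ∘ x.
Proof. rewrite fmap_comp, cmp_assoc; reflexivity. Qed.
Ltac fuse := cbn; nrm; repeat (first [rewrite <- fmap_comp | rewrite fmap_comp_r]; nrm).
Ltac spl := cbn; repeat rewrite fmap_comp; repeat rewrite fmap_id; repeat rewrite cmp_id_l; repeat rewrite cmp_id_r; nrm.

Definition Mono {C : Category} {a b : C} (f : hom a b) :=
  forall z (g h : hom z a), f ∘ g = f ∘ h -> g = h.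

Lemma eq_mono {C : Category} {e x y : C} (m : hom e x) (f g : hom x y) :
  IsEqualizer m f g -> Mono m.
Proof.
  intros [H1 H2] z a b Hab.
  assert (Hk : f ∘ (m ∘ a) = g ∘ (m ∘ a)) by (rewrite !cmp_assoc, H1; reflexivity).
  destruct (H2 z _ Hk) as [u [Hu Hu']].
  transitivity u; [symmetry|]; apply Hu'; auto.
Qed.

Lemma mono_cancel {C : Category} {a b : C} (f : hom a b) z (g h : hom z a) :
  Mono f -> f ∘ g = f ∘ h -> g = h.
Proof. intros H; apply H. Qed.

Lemma ex_of_uniq (A : Type) (P : A -> Prop) : (exists! x, P x) -> exists x, P x.
Proof. intros [x [Hx _]]; exists x; exact Hx. Qed.

Definition efac {C : Category} {e x y z : C} {m : hom e x} {f g : hom x y}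
  (H : IsEqualizer m f g) {k : hom z x} (Hk : f ∘ k = g ∘ k) : hom z e :=
  proj1_sig (constructive_indefinite_description _ (ex_of_uniq (proj2 H z k Hk))).

Lemma efac_spec {C : Category} {e x y z : C} {m : hom e x} {f g : hom x y}
  (H : IsEqualizer m f g) {k : hom z x} (Hk : f ∘ k = g ∘ k) : m ∘ efac H Hk = k.
Proof. unfold efac; destruct (constructive_indefinite_description _ _); auto. Qed.

Section Adj.
Context {C D : Category} (adj : Adjunction C D).
Local Notation N := (adjL adj).
Local Notation R := (adjR adj).
Local Notation η := (unit adj).
Local Notation ε := (counit adj).

Lemma eta_nat a b (f : hom a b) : η b ∘ f = fmap R (fmap N f) ∘ η a.
Proof. exact (ntnat η f). Qed.
Lemma eps_nat a b (f : hom a b) : ε b ∘ fmap N (fmap R f) = f ∘ ε a.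
Proof. exact (ntnat ε f). Qed.
Lemma triL x : ε (N x) ∘ fmap N (η x) = idm (N x).
Proof. exact (tri_l adj x). Qed.
Lemma triR y : fmap R (ε y) ∘ η (R y) = idm (R y).
Proof. exact (tri_r adj y). Qed.

Lemma transpose z y (a : hom z (R y)) : a = fmap R (ε y) ∘ fmap R (fmap N a) ∘ η z.
Proof. rw (eq_sym (eta_nat a)). rw (triR y). reflexivity. Qed.

Lemma transpose2 z y (a : hom (N z) y) : a = ε y ∘ fmap N (fmap R a) ∘ fmap N (η z).
Proof. rw (eps_nat a). rw (triL z). reflexivity. Qed.

Lemma R_mono y y' (f : hom y y') : Mono f -> Mono (fmap R f).
Proof.
  intros Hf z a b H.
  rewrite (transpose a), (transpose b). cbn. rewrite <- !fmap_comp. do 2 f_equal.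
  apply Hf. rw (eq_sym (eps_nat f)). rw (eq_sym (eps_nat f)). rewrite <- !fmap_comp, H. reflexivity.
Qed.

Lemma R_eq (e x y : D) (m : hom e x) (f g : hom x y) :
  IsEqualizer m f g -> IsEqualizer (fmap R m) (fmap R f) (fmap R g).
Proof.
  intros Hm. pose proof (eq_mono Hm) as Mm. destruct Hm as [H1 H2]. split.
  - rewrite <- !fmap_comp, H1; reflexivity.
  - intros z k Hk.
    assert (Hk' : f ∘ (ε x ∘ fmap N k) = g ∘ (ε x ∘ fmap N k)).
    { rw (eq_sym (eps_nat f)). rw (eq_sym (eps_nat g)). rewrite <- !fmap_comp, Hk; reflexivity. }
    destruct (H2 _ _ Hk') as [u [Hu _]].
    assert (E : fmap R m ∘ (fmap R u ∘ η z) = k).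
    { cbn. rewrite cmp_assoc, <- fmap_comp, Hu. rewrite (transpose k) at 2. cbn. rewrite !fmap_comp; nrm; reflexivity. }
    exists (fmap R u ∘ η z). split; auto.
    intros u' Hu'. apply (R_mono Mm). rewrite Hu'; exact E.
Qed.
End Adj.

Arguments efac : simpl never.

Lemma efac_uniq {C : Category} {e x y z : C} {m : hom e x} {f g : hom x y}
  (H : IsEqualizer m f g) {k : hom z x} (Hk : f ∘ k = g ∘ k) (u : hom z e) :
  m ∘ u = k -> u = efac H Hk.
Proof. intros Hu. apply (eq_mono H). rewrite efac_spec; exact Hu. Qed.

Definition ntid {C D : Category} (F : Functor C D) : NatTrans F F.
Proof. refine {| ntc := fun x => idm (F x) |}. intros; rewrite cmp_id_l, cmp_id_r; reflexivity. Defined.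

Definition ntcomp {C D : Category} {F G H : Functor C D} (b : NatTrans G H) (a : NatTrans F G) : NatTrans F H.
Proof. refine {| ntc := fun x => b x ∘ a x |}. intros. rewrite <- cmp_assoc, ntnat, cmp_assoc, ntnat, cmp_assoc; reflexivity. Defined.

Section PW.
Context {C D : Category} (HD : HasEqualizers D) {E F G : Functor C D} (i : NatTrans E F)
  (al be : forall x, hom (F x) (G x))
  (aln : forall a b (f: hom a b), al b ∘ fmap F f = fmap G f ∘ al a)
  (ben : forall a b (f: hom a b), be b ∘ fmap F f = fmap G f ∘ be a)
  (Hi : IsEqualizerNT i al be).

Definition pw_choose (x : C) : {e : D & {m : hom e (F x) | IsEqualizer m (al x) (be x)}}.
Proof.
  destruct (constructive_indefinite_description _ (HD (al x) (be x))) as [e He].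
  exists e. apply constructive_indefinite_description; exact He.
Defined.
Definition pwo x := projT1 (pw_choose x).
Definition pwm x : hom (pwo x) (F x) := proj1_sig (projT2 (pw_choose x)).
Lemma pwH x : IsEqualizer (pwm x) (al x) (be x).
Proof. exact (proj2_sig (projT2 (pw_choose x))). Qed.

Lemma pw_fm_ok a b (f : hom a b) : al b ∘ (fmap F f ∘ pwm a) = be b ∘ (fmap F f ∘ pwm a).
Proof. rewrite !cmp_assoc, aln, ben, <- !cmp_assoc, (proj1 (pwH a)); reflexivity. Qed.

Definition pwF : Functor C D.
Proof.
  refine {| fobj := pwo; fmap := fun a b f => efac (pwH b) (pw_fm_ok f) |}.
  - intros a. symmetry. apply efac_uniq. rewrite fmap_id, cmp_id_l, cmp_id_r; reflexivity.
  - intros a b c g f. symmetry. apply efac_uniq. rewrite cmp_assoc, efac_spec, <- cmp_assoc, efac_spec.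
    rewrite fmap_comp, cmp_assoc; reflexivity.
Defined.

Definition pwNT : NatTrans pwF F.
Proof. refine (@Build_NatTrans C D pwF F pwm _). intros a b f. cbn. apply efac_spec. Defined.

Definition pwv : NatTrans E pwF.
Proof.
  refine (@Build_NatTrans C D E pwF (fun x => efac (pwH x) (proj1 Hi x)) _).
  intros a b f. apply (eq_mono (pwH b)). cbn. rewrite cmp_assoc, efac_spec.
  rewrite cmp_assoc, efac_spec, <- cmp_assoc, efac_spec. apply ntnat.
Defined.

Lemma pointwise_eq x : IsEqualizer (i x) (al x) (be x).
Proof.
  pose proof Hi as [Hi1 Hi2].
  destruct (Hi2 pwF pwNT (fun x => proj1 (pwH x))) as [u [Hu _]].
  destruct (Hi2 E i Hi1) as [w [_ Hw]].
  assert (Huv : forall x, u x ∘ pwv x = idm (E x)).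
  { intros y. transitivity (w y).
    - apply (Hw (ntcomp u pwv)). intros z. cbn. rewrite cmp_assoc, Hu. cbn. apply efac_spec.
    - symmetry. apply (Hw (ntid E)). intros z. cbn. apply cmp_id_r. }
  split; [apply Hi1|].
  intros z k Hk. exists (u x ∘ efac (pwH x) Hk). split.
  - rewrite cmp_assoc, Hu. cbn. apply efac_spec.
  - intros w' Hw'.
    rewrite <- (cmp_id_l w'), <- Huv, <- cmp_assoc. f_equal. symmetry. apply efac_uniq.
    rewrite cmp_assoc. cbn. rewrite efac_spec. exact Hw'.
Qed.
End PW.

Section RegU.
Context {C D : Category} (adj : Adjunction C D) (HC : HasEqualizers C) (Hr : RegularNatMono (unit adj)).
Local Notation N := (adjL adj).
Local Notation R := (adjR adj).
Local Notation η := (unit adj).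
Local Notation ε := (counit adj).

Lemma eta_reg : exists (G : Functor C C) (al be : forall x, hom (R (N x)) (G x)),
   forall x, IsEqualizer (η x) (al x) (be x).
Proof.
  destruct Hr as [G [al [be H]]]. exists G, al, be.
  apply (pointwise_eq HC (ntnat al) (ntnat be) H).
Qed.

Lemma eta_mono x : Mono (η x).
Proof. destruct eta_reg as [G [al [be H]]]. exact (eq_mono (H x)). Qed.

Lemma eta_can x : IsEqualizer (η x) (fmap R (fmap N (η x))) (η (R (N x))).
Proof.
  destruct eta_reg as [G [al [be H]]]. split.
  - symmetry. apply (eta_nat adj).
  - intros z k Hk.
    assert (E : al x ∘ k = be x ∘ k).
    { apply (@eta_mono (G x)).
      rw (eta_nat adj (al x)). rw (eta_nat adj (be x)). cbn in Hk. rewrite <- Hk. cbn.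
      rw (f_equal (fmap R) (f_equal (fmap N) (proj1 (H x)))). reflexivity. }
    exists (efac (H x) E). split; [apply efac_spec|].
    intros u Hu. apply (@eta_mono x). rewrite efac_spec; auto.
Qed.
End RegU.

Section Desc.
Context {C D : Category} (adj : Adjunction C D).
Local Notation N := (adjL adj).
Local Notation R := (adjR adj).
Local Notation η := (unit adj).
Local Notation ε := (counit adj).
Context (Np : PreservesEqualizers N) (Z : D) (ζ : hom Z (N (R Z)))
  (Hcu : ε Z ∘ ζ = idm Z)
  (Hca : fmap N (fmap R ζ) ∘ ζ = fmap N (η (R Z)) ∘ ζ)
  (X : C) (m : hom X (R Z)) (Hm : IsEqualizer m (fmap R ζ) (η (R Z))).

Definition dpsi : hom (N X) Z := ε Z ∘ fmap N m.
Lemma d_Nm : fmap N m = ζ ∘ dpsi.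
Proof.
  unfold dpsi. rw (eq_sym (eps_nat adj ζ)). rewrite <- fmap_comp.
  pose proof (proj1 Hm) as E. cbn in E. rewrite E. rewrite fmap_comp. rw (triL adj (R Z)).
  reflexivity.
Qed.
Definition dphi : hom Z (N X) := efac (Np Hm) Hca.
Lemma d_phi : fmap N m ∘ dphi = ζ.
Proof. apply efac_spec. Qed.
Lemma d_psiphi : dpsi ∘ dphi = idm Z.
Proof. unfold dpsi. rw d_phi. exact Hcu. Qed.
Lemma d_phipsi : dphi ∘ dpsi = idm (N X).
Proof.
  apply (eq_mono (Np Hm)). rw d_phi. symmetry; apply d_Nm.
Qed.
End Desc.

Arguments dpsi : simpl never.
Arguments dphi : simpl never.


Definition chooseEq {C : Category} (H : HasEqualizers C) {x y : C} (f g : hom x y) :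
  {e : C & {m : hom e x | IsEqualizer m f g}}.
Proof.
  destruct (constructive_indefinite_description _ (H _ _ f g)) as [e He].
  exists e. apply constructive_indefinite_description; exact He.
Defined.

Lemma linv_mono {C : Category} {a b : C} (f : hom a b) (g : hom b a) : g ∘ f = idm a -> Mono f.
Proof.
  intros H z u v E. rewrite <- (cmp_id_l u), <- (cmp_id_l v), <- H, <- !cmp_assoc, E; reflexivity.
Qed.

Lemma fmap_linv {C D : Category} (F : Functor C D) {a b : C} (f : hom a b) (g : hom b a) :
  g ∘ f = idm a -> fmap F g ∘ fmap F f = idm (F a).
Proof. intros H; rewrite <- fmap_comp, H, fmap_id; reflexivity. Qed.

Section Main.
Context (A B T : Category)
  (HeqA : HasEqualizers A) (HeqB : HasEqualizers B)
  (adjA : Adjunction A T) (adjB : Adjunction B T)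
  (tau : TauType adjA adjB) (Htau : IsRegularPreTorsor adjA adjB tau)
  (C : Functor A A) (i : NatTrans C (PhiA adjA adjB))
  (Hi : IsEqualizerNT i (omega_l adjA adjB tau) (omega_r adjA adjB))
  (DeltaC : NatTrans C (Fcomp C C)) (epsC : NatTrans C (Fid A))
  (HC : ComonadDataC adjA adjB tau i DeltaC epsC)
  (D : Functor B B) (j : NatTrans D (PhiB adjA adjB))
  (Hj : IsEqualizerNT j (theta_l adjA adjB tau) (theta_r adjA adjB))
  (DeltaD : NatTrans D (Fcomp D D)) (epsD : NatTrans D (Fid B))
  (HD : ComonadDataD adjA adjB tau j DeltaD epsD).

Local Notation NA := (adjL adjA).
Local Notation RA := (adjR adjA).
Local Notation NB := (adjL adjB).
Local Notation RB := (adjR adjB).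
Local Notation etaA := (unit adjA).
Local Notation epsA := (counit adjA).
Local Notation etaB := (unit adjB).
Local Notation epsB := (counit adjB).

Lemma HP1 y : fmap RA (fmap NB (fmap RB (epsA (NB y)))) ∘ tau y = fmap RA (fmap NB (etaB y)).
Proof. exact (proj1 (proj1 Htau) y). Qed.
Lemma HP2 y : fmap RA (epsB (NA (RA (NB y)))) ∘ tau y = etaA (RA (NB y)).
Proof. exact (proj1 (proj2 (proj1 Htau)) y). Qed.
Lemma HP3 y : fmap RA (fmap NB (fmap RB (fmap NA (tau y)))) ∘ tau y = tau (RB (NA (RA (NB y)))) ∘ tau y.
Proof. exact (proj2 (proj2 (proj1 Htau)) y). Qed.
Lemma tau_nat a b (f : hom a b) :
  tau b ∘ fmap RA (fmap NB f) = fmap RA (fmap NB (fmap RB (fmap NA (fmap RA (fmap NB f))))) ∘ tau a.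
Proof. exact (ntnat tau f). Qed.

Lemma etaA_mono x : Mono (etaA x).
Proof. exact (@eta_mono _ _ adjA HeqA (proj1 (proj1 (proj2 Htau))) x). Qed.
Lemma etaB_mono x : Mono (etaB x).
Proof. exact (@eta_mono _ _ adjB HeqB (proj1 (proj2 (proj2 Htau))) x). Qed.
Lemma etaA_can x : IsEqualizer (etaA x) (fmap RA (fmap NA (etaA x))) (etaA (RA (NA x))).
Proof. exact (eta_can HeqA (proj1 (proj1 (proj2 Htau))) x). Qed.
Lemma etaB_can x : IsEqualizer (etaB x) (fmap RB (fmap NB (etaB x))) (etaB (RB (NB x))).
Proof. exact (eta_can HeqB (proj1 (proj2 (proj2 Htau))) x). Qed.
Lemma NA_pres : PreservesEqualizers NA.
Proof. exact (proj2 (proj1 (proj2 Htau))). Qed.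
Lemma NB_pres : PreservesEqualizers NB.
Proof. exact (proj2 (proj2 (proj2 Htau))). Qed.

Lemma iE x : IsEqualizer (i x) (omega_l adjA adjB tau x) (omega_r adjA adjB x).
Proof.
  apply (pointwise_eq HeqA); [| |exact Hi]; intros a b f; unfold omega_l, omega_r; cbn.
  - rw (tau_nat (fmap RB (fmap NA f))).
    rw (f_equal (fun g => fmap RA (fmap NB (fmap RB (fmap NA (fmap RA g))))) (eps_nat adjB (fmap NA f))). reflexivity.
  - rw (f_equal (fun g => fmap RA (fmap NB (fmap RB (fmap NA g))))  (eta_nat adjA f)). reflexivity.
Qed.

Lemma jE y : IsEqualizer (j y) (theta_l adjA adjB tau y) (theta_r adjA adjB y).
Proof.
  apply (pointwise_eq HeqB); [| |exact Hj]; intros a b f; unfold theta_l, theta_r; cbn.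
  - rw (f_equal (fmap RB) (f_equal (fmap NA) (tau_nat f))). rw (f_equal (fmap RB) (eps_nat adjA (fmap NB (fmap RB (fmap NA (fmap RA (fmap NB f))))))). reflexivity.
  - rw (eta_nat adjB (fmap RB (fmap NA (fmap RA (fmap NB f))))). reflexivity.
Qed.

Lemma iM x : Mono (i x).
Proof. exact (eq_mono (iE x)). Qed.
Lemma jM y : Mono (j y).
Proof. exact (eq_mono (jE y)). Qed.

Lemma KLiM x : Mono (fmap RA (fmap NB (fmap RB (fmap NA (i x))))).
Proof.
  apply (eq_mono (R_eq adjA (NB_pres (R_eq adjB (NA_pres (iE x)))))).
Qed.
Lemma LKjM y : Mono (fmap RB (fmap NA (fmap RA (fmap NB (j y))))).
Proof.
  apply (eq_mono (R_eq adjB (NA_pres (R_eq adjA (NB_pres (jE y)))))).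
Qed.

Lemma HC1 x : fmap (PhiA adjA adjB) (i x) ∘ i (C x) ∘ DeltaC x = tau (RB (NA x)) ∘ i x.
Proof. exact (proj1 HC x). Qed.
Lemma HC2 x : etaA x ∘ epsC x = fmap RA (epsB (NA x)) ∘ i x.
Proof. exact (proj2 HC x). Qed.
Lemma HD1 y : fmap (PhiB adjA adjB) (j y) ∘ j (D y) ∘ DeltaD y = fmap RB (fmap NA (tau y)) ∘ j y.
Proof. exact (proj1 HD y). Qed.
Lemma HD2 y : etaB y ∘ epsD y = fmap RB (epsA (NB y)) ∘ j y.
Proof. exact (proj2 HD y). Qed.
Lemma i_nat a b (f : hom a b) : i b ∘ fmap C f = fmap RA (fmap NB (fmap RB (fmap NA f))) ∘ i a.
Proof. exact (ntnat i f). Qed.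
Lemma j_nat a b (f : hom a b) : j b ∘ fmap D f = fmap RB (fmap NA (fmap RA (fmap NB f))) ∘ j a.
Proof. exact (ntnat j f). Qed.

Notation CC := (Comodule DeltaC epsC).
Notation DD := (Comodule DeltaD epsD).

Definition rC (M : CC) : hom (cm_ob M) (RA (NB (RB (NA (cm_ob M))))) := i (cm_ob M) ∘ cm_coact M.

Lemma rC_2 M : fmap RA (epsB (NA (cm_ob M))) ∘ rC M = etaA (cm_ob M).
Proof.
  unfold rC. rw (eq_sym (HC2 (cm_ob M))). pose proof (cm_counit M) as E. cbn in E. rewrite E.
  apply cmp_id_r.
Qed.

Lemma rC_3 M : tau (RB (NA (cm_ob M))) ∘ rC M = fmap RA (fmap NB (fmap RB (fmap NA (rC M)))) ∘ rC M.
Proof.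
  unfold rC. rw (eq_sym (HC1 (cm_ob M))). rw (eq_sym (cm_coassoc M)). rw (i_nat (cm_coact M)). reflexivity.
Qed.

Section MkC.
Context (X : A) (r : hom X (RA (NB (RB (NA X)))))
  (H2 : fmap RA (epsB (NA X)) ∘ r = etaA X)
  (H3 : tau (RB (NA X)) ∘ r = fmap RA (fmap NB (fmap RB (fmap NA r))) ∘ r).

Lemma mkC_1 : omega_l adjA adjB tau X ∘ r = omega_r adjA adjB X ∘ r.
Proof.
  unfold omega_l, omega_r. rw H3. rw (f_equal (fun g => fmap RA (fmap NB (fmap RB (fmap NA g)))) H2). reflexivity.
Qed.

Definition mkC_coact : hom X (C X) := efac (iE X) mkC_1.
Lemma mkC_coact_spec : i X ∘ mkC_coact = r.
Proof. apply efac_spec. Qed.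

Lemma mkC_coassoc : fmap C mkC_coact ∘ mkC_coact = DeltaC X ∘ mkC_coact.
Proof.
  apply (iM (x:=C X)). apply (KLiM (x:=X)).
  rw (i_nat mkC_coact). rw (f_equal (fun g => fmap RA (fmap NB (fmap RB (fmap NA g)))) mkC_coact_spec).
  rw mkC_coact_spec.
  pose proof (HC1 X) as E. rw E. rw mkC_coact_spec. symmetry; exact H3.
Qed.

Lemma mkC_counit : epsC X ∘ mkC_coact = idm X.
Proof.
  apply (etaA_mono (x:=X)). rw (HC2 X). rw mkC_coact_spec. exact H2.
Qed.

Definition mkC : CC := Build_Comodule mkC_coassoc mkC_counit.
End MkC.

Lemma rC_mkC X r H2 H3 : rC (@mkC X r H2 H3) = r.
Proof. apply mkC_coact_spec. Qed.

Lemma homC (M M' : CC) (f : hom (cm_ob M) (cm_ob M')) :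
  rC M' ∘ f = fmap RA (fmap NB (fmap RB (fmap NA f))) ∘ rC M -> cm_coact M' ∘ f = fmap C f ∘ cm_coact M.
Proof. unfold rC; intros E. apply (iM (x:=cm_ob M')). rw E. rw (i_nat f). reflexivity. Qed.

Lemma homC_r (M M' : CC) (f : ComoduleHom M M') :
  rC M' ∘ proj1_sig f = fmap RA (fmap NB (fmap RB (fmap NA (proj1_sig f)))) ∘ rC M.
Proof. unfold rC. destruct f as [f Hf]; cbn. rw Hf. rw (i_nat f). reflexivity. Qed.

Definition sD (M : DD) : hom (cm_ob M) (RB (NA (RA (NB (cm_ob M))))) := j (cm_ob M) ∘ cm_coact M.

Lemma sD_2 M : fmap RB (epsA (NB (cm_ob M))) ∘ sD M = etaB (cm_ob M).
Proof.
  unfold sD. rw (eq_sym (HD2 (cm_ob M))). pose proof (cm_counit M) as E. cbn in E. rewrite E.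
  apply cmp_id_r.
Qed.

Lemma sD_3 M : fmap RB (fmap NA (tau (cm_ob M))) ∘ sD M = fmap RB (fmap NA (fmap RA (fmap NB (sD M)))) ∘ sD M.
Proof.
  unfold sD. rw (eq_sym (HD1 (cm_ob M))). rw (eq_sym (cm_coassoc M)). rw (j_nat (cm_coact M)). reflexivity.
Qed.

Section MkD.
Context (Y : B) (s : hom Y (RB (NA (RA (NB Y)))))
  (H2 : fmap RB (epsA (NB Y)) ∘ s = etaB Y)
  (H3 : fmap RB (fmap NA (tau Y)) ∘ s = fmap RB (fmap NA (fmap RA (fmap NB s))) ∘ s).

Lemma mkD_1 : theta_l adjA adjB tau Y ∘ s = theta_r adjA adjB Y ∘ s.
Proof.
  unfold theta_l, theta_r. rw H3. rw (f_equal (fmap RB) (eps_nat adjA (fmap NB s))). rw H2.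
  rw (eq_sym (eta_nat adjB s)). reflexivity.
Qed.

Definition mkD_coact : hom Y (D Y) := efac (jE Y) mkD_1.
Lemma mkD_coact_spec : j Y ∘ mkD_coact = s.
Proof. apply efac_spec. Qed.

Lemma mkD_coassoc : fmap D mkD_coact ∘ mkD_coact = DeltaD Y ∘ mkD_coact.
Proof.
  apply (jM (y:=D Y)). apply (LKjM (y:=Y)).
  rw (j_nat mkD_coact). rw (f_equal (fun g => fmap RB (fmap NA (fmap RA (fmap NB g)))) mkD_coact_spec).
  rw mkD_coact_spec.
  pose proof (HD1 Y) as E. rw E. rw mkD_coact_spec. symmetry; exact H3.
Qed.

Lemma mkD_counit : epsD Y ∘ mkD_coact = idm Y.
Proof.
  apply (etaB_mono (x:=Y)). rw (HD2 Y). rw mkD_coact_spec. exact H2.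
Qed.

Definition mkD : DD := Build_Comodule mkD_coassoc mkD_counit.
End MkD.

Lemma sD_mkD Y s H2 H3 : sD (@mkD Y s H2 H3) = s.
Proof. apply mkD_coact_spec. Qed.

Lemma homD (M M' : DD) (f : hom (cm_ob M) (cm_ob M')) :
  sD M' ∘ f = fmap RB (fmap NA (fmap RA (fmap NB f))) ∘ sD M -> cm_coact M' ∘ f = fmap D f ∘ cm_coact M.
Proof. unfold sD; intros E. apply (jM (y:=cm_ob M')). rw E. rw (j_nat f). reflexivity. Qed.

Lemma homD_r (M M' : DD) (f : ComoduleHom M M') :
  sD M' ∘ proj1_sig f = fmap RB (fmap NA (fmap RA (fmap NB (proj1_sig f)))) ∘ sD M.
Proof. unfold sD. destruct f as [f Hf]; cbn. rw Hf. rw (j_nat f). reflexivity. Qed.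

Section FObj.
Context (M : CC).
Local Notation X := (cm_ob M).
Local Notation r := (rC M).

Definition nu : hom (NA X) (NB (RB (NA X))) := epsA (NB (RB (NA X))) ∘ fmap NA r.

Lemma nu_cu : epsB (NA X) ∘ nu = idm (NA X).
Proof.
  unfold nu. rw (eq_sym (eps_nat adjA (epsB (NA X)))). rw (f_equal (fmap NA) (rC_2 M)). rw (triL adjA X). reflexivity.
Qed.

Lemma nu_ca : fmap NB (fmap RB nu) ∘ nu = fmap NB (etaB (RB (NA X))) ∘ nu.
Proof.
  unfold nu.
  rw (eq_sym (eps_nat adjA (fmap NB (fmap RB (epsA (NB (RB (NA X))) ∘ fmap NA r))))).
  rw (f_equal (fmap NA) (eq_sym (rC_3 M))). rw (f_equal (fmap NA) (HP1 (RB (NA X)))).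
  rw (eps_nat adjA (fmap NB (etaB (RB (NA X))))). reflexivity.
Qed.

Definition FXe := chooseEq HeqB (fmap RB nu) (etaB (RB (NA X))).
Definition FXo : B := projT1 FXe.
Definition mF : hom FXo (RB (NA X)) := proj1_sig (projT2 FXe).
Lemma mF_eq : IsEqualizer mF (fmap RB nu) (etaB (RB (NA X))).
Proof. exact (proj2_sig (projT2 FXe)). Qed.
Definition psiF : hom (NB FXo) (NA X) := dpsi mF.
Definition phiF : hom (NA X) (NB FXo) := dphi NB_pres nu_ca mF_eq.
Lemma psiF_phiF : psiF ∘ phiF = idm (NA X).
Proof. exact (d_psiphi NB_pres nu_cu nu_ca mF_eq). Qed.
Lemma phiF_psiF : phiF ∘ psiF = idm (NB FXo).
Proof. exact (d_phipsi NB_pres nu_ca mF_eq). Qed.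
Lemma NmF : fmap NB mF = nu ∘ psiF.
Proof. exact (d_Nm mF_eq). Qed.
Lemma NmF_phi : fmap NB mF ∘ phiF = nu.
Proof. exact (d_phi NB_pres nu_ca mF_eq). Qed.
Lemma psiF_def : psiF = epsB (NA X) ∘ fmap NB mF.
Proof. reflexivity. Qed.
Lemma mF_1 : fmap RB nu ∘ mF = etaB (RB (NA X)) ∘ mF.
Proof. exact (proj1 mF_eq). Qed.

Definition sF : hom FXo (RB (NA (RA (NB FXo)))) :=
  fmap RB (fmap NA (fmap RA phiF)) ∘ fmap RB (fmap NA (etaA X)) ∘ mF.

Lemma Lt_s : fmap RB (fmap NA (fmap RA psiF)) ∘ sF = fmap RB (fmap NA (etaA X)) ∘ mF.
Proof. unfold sF. rw (f_equal (fun g => fmap RB (fmap NA (fmap RA g))) psiF_phiF). reflexivity. Qed.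

Lemma nu_eta : fmap RA nu ∘ etaA X = r.
Proof. unfold nu. rw (eq_sym (eta_nat adjA r)). rw (triR adjA (NB (RB (NA X)))). reflexivity. Qed.

Lemma RBpsi_eta : fmap RB psiF ∘ etaB FXo = mF.
Proof. rewrite psiF_def. rw (eq_sym (eta_nat adjB mF)). rw (triR adjB (NA X)). reflexivity. Qed.

Lemma sF_2 : fmap RB (epsA (NB FXo)) ∘ sF = etaB FXo.
Proof.
  apply (linv_mono (fmap_linv RB phiF_psiF)).
  rw RBpsi_eta.
  rw (f_equal (fmap RB) (eq_sym (eps_nat adjA psiF))). rw Lt_s.
  rw (f_equal (fmap RB) (triL adjA X)). reflexivity.
Qed.
End FObj.
Section FObj2.
Context (M : CC).
Local Notation X := (cm_ob M).
Local Notation r := (rC M).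

Lemma tau_t : fmap RA (fmap NB (fmap RB (fmap NA (fmap RA (psiF M))))) ∘ tau (FXo M)
  = fmap RA (fmap NB (fmap RB (fmap NA (fmap RA (epsB (NA X)))))) ∘ tau (RB (NA X)) ∘ fmap RA (fmap NB (mF M)).
Proof. rewrite psiF_def. rw (eq_sym (tau_nat (mF M))). reflexivity. Qed.

Lemma K_mF : fmap RA (fmap NB (mF M)) = fmap RA (nu M) ∘ fmap RA (psiF M).
Proof. rewrite NmF. apply fmap_comp. Qed.

Lemma sF_3 : fmap RB (fmap NA (tau (FXo M))) ∘ sF M = fmap RB (fmap NA (fmap RA (fmap NB (sF M)))) ∘ sF M.
Proof.
  apply (linv_mono (fmap_linv RB (fmap_linv NA (fmap_linv RA (fmap_linv NB (fmap_linv RB (fmap_linv NA (fmap_linv RA (phiF_psiF M))))))))).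
  rw (f_equal (fun g => fmap RB (fmap NA g)) tau_t).
  rw (f_equal (fun g => fmap RB (fmap NA g)) K_mF).
  rw (Lt_s M).
  rw (f_equal (fun g => fmap RB (fmap NA g)) (nu_eta M)).
  rw (f_equal (fun g => fmap RB (fmap NA g)) (rC_3 M)).
  rw (f_equal (fun g => fmap RB (fmap NA (fmap RA (fmap NB (fmap RB (fmap NA g)))))) (rC_2 M)).
  rw (f_equal (fun g => fmap RB (fmap NA (fmap RA (fmap NB g)))) (Lt_s M)).
  rw (f_equal (fun g => fmap RB (fmap NA g)) K_mF).
  rw (Lt_s M).
  rw (f_equal (fun g => fmap RB (fmap NA g)) (nu_eta M)).
  reflexivity.
Qed.

Definition FO : DD := mkD (sF_2 M) sF_3.
End FObj2.

Section FMor.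
Context (M M' : CC) (f : ComoduleHom M M').
Local Notation f0 := (proj1_sig f).

Lemma nu_nat : nu M' ∘ fmap NA f0 = fmap NB (fmap RB (fmap NA f0)) ∘ nu M.
Proof.
  unfold nu. rw (f_equal (fmap NA) (homC_r f)).
  rw (eps_nat adjA (fmap NB (fmap RB (fmap NA f0)))). reflexivity.
Qed.

Lemma Ff_ok : fmap RB (nu M') ∘ (fmap RB (fmap NA f0) ∘ mF M)
  = etaB (RB (NA (cm_ob M'))) ∘ (fmap RB (fmap NA f0) ∘ mF M).
Proof.
  rw (f_equal (fmap RB) nu_nat). rw (mF_1 M). rw (eq_sym (eta_nat adjB (fmap RB (fmap NA f0)))). reflexivity.
Qed.

Definition Fm : hom (FXo M) (FXo M') := efac (mF_eq M') Ff_ok.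
Lemma Fm_spec : mF M' ∘ Fm = fmap RB (fmap NA f0) ∘ mF M.
Proof. apply efac_spec. Qed.

Lemma psi_nat : psiF M' ∘ fmap NB Fm = fmap NA f0 ∘ psiF M.
Proof.
  rewrite !psiF_def. rw (f_equal (fmap NB) Fm_spec). rw (eps_nat adjB (fmap NA f0)). reflexivity.
Qed.

Lemma Fm_hom : sF M' ∘ Fm = fmap RB (fmap NA (fmap RA (fmap NB Fm))) ∘ sF M.
Proof.
  apply (linv_mono (fmap_linv RB (fmap_linv NA (fmap_linv RA (phiF_psiF M'))))).
  rw (Lt_s M'). rw Fm_spec.
  rw (f_equal (fun g => fmap RB (fmap NA (fmap RA g))) psi_nat). rw (Lt_s M).
  rw (f_equal (fun g => fmap RB (fmap NA g)) (eq_sym (eta_nat adjA f0))). reflexivity.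
Qed.

Definition FmH : ComoduleHom (FO M) (FO M').
Proof.
  exists Fm. apply homD. unfold FO. rewrite !sD_mkD. exact Fm_hom.
Defined.
End FMor.

Definition FF : Functor (ComoduleCat C DeltaC epsC) (ComoduleCat D DeltaD epsD).
Proof.
  refine (@Build_Functor (ComoduleCat C DeltaC epsC) (ComoduleCat D DeltaD epsD) FO (fun M M2 f => FmH f) _ _).
  - intros M. apply comodule_hom_eq. cbn. symmetry. apply efac_uniq. cbn. normid. reflexivity.
  - intros M1 M2 M3 g f. apply comodule_hom_eq. cbn. symmetry. apply efac_uniq.
    unfold cm_comp; cbn. rw (Fm_spec g). rw (Fm_spec f). reflexivity.
Defined.

Section GObj.
Context (N : DD).
Local Notation Y := (cm_ob N).
Local Notation s := (sD N).

Definition mu : hom (NB Y) (NA (RA (NB Y))) := epsB (NA (RA (NB Y))) ∘ fmap NB s.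

Lemma mu_cu : epsA (NB Y) ∘ mu = idm (NB Y).
Proof.
  unfold mu. rw (eq_sym (eps_nat adjB (epsA (NB Y)))). rw (f_equal (fmap NB) (sD_2 N)). rw (triL adjB Y). reflexivity.
Qed.

Lemma mu_ca : fmap NA (fmap RA mu) ∘ mu = fmap NA (etaA (RA (NB Y))) ∘ mu.
Proof.
  unfold mu.
  rw (eq_sym (eps_nat adjB (fmap NA (fmap RA (epsB (NA (RA (NB Y))) ∘ fmap NB s))))).
  rw (f_equal (fmap NB) (eq_sym (sD_3 N))). rw (f_equal (fun g => fmap NB (fmap RB (fmap NA g))) (HP2 Y)).
  rw (eps_nat adjB (fmap NA (etaA (RA (NB Y))))). reflexivity.
Qed.

Definition GYe := chooseEq HeqA (fmap RA mu) (etaA (RA (NB Y))).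
Definition GYo : A := projT1 GYe.
Definition nG : hom GYo (RA (NB Y)) := proj1_sig (projT2 GYe).
Lemma nG_eq : IsEqualizer nG (fmap RA mu) (etaA (RA (NB Y))).
Proof. exact (proj2_sig (projT2 GYe)). Qed.
Definition psiG : hom (NA GYo) (NB Y) := dpsi nG.
Definition phiG : hom (NB Y) (NA GYo) := dphi NA_pres mu_ca nG_eq.
Lemma psiG_phiG : psiG ∘ phiG = idm (NB Y).
Proof. exact (d_psiphi NA_pres mu_cu mu_ca nG_eq). Qed.
Lemma phiG_psiG : phiG ∘ psiG = idm (NA GYo).
Proof. exact (d_phipsi NA_pres mu_ca nG_eq). Qed.
Lemma NnG : fmap NA nG = mu ∘ psiG.
Proof. exact (d_Nm nG_eq). Qed.
Lemma NnG_phi : fmap NA nG ∘ phiG = mu.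
Proof. exact (d_phi NA_pres mu_ca nG_eq). Qed.
Lemma psiG_def : psiG = epsA (NB Y) ∘ fmap NA nG.
Proof. reflexivity. Qed.
Lemma nG_1 : fmap RA mu ∘ nG = etaA (RA (NB Y)) ∘ nG.
Proof. exact (proj1 nG_eq). Qed.

Definition rG : hom GYo (RA (NB (RB (NA GYo)))) :=
  fmap RA (fmap NB (fmap RB phiG)) ∘ fmap RA (fmap NB (etaB Y)) ∘ nG.

Lemma Kt_r : fmap RA (fmap NB (fmap RB psiG)) ∘ rG = fmap RA (fmap NB (etaB Y)) ∘ nG.
Proof. unfold rG. rw (f_equal (fun g => fmap RA (fmap NB (fmap RB g))) psiG_phiG). reflexivity. Qed.

Lemma s_eta : fmap RB mu ∘ etaB Y = s.
Proof. unfold mu. rw (eq_sym (eta_nat adjB s)). rw (triR adjB (NA (RA (NB Y)))). reflexivity. Qed.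

Lemma RApsi_eta : fmap RA psiG ∘ etaA GYo = nG.
Proof. rewrite psiG_def. rw (eq_sym (eta_nat adjA nG)). rw (triR adjA (NB Y)). reflexivity. Qed.

Lemma rG_2 : fmap RA (epsB (NA GYo)) ∘ rG = etaA GYo.
Proof.
  apply (linv_mono (fmap_linv RA phiG_psiG)).
  rw RApsi_eta.
  rw (f_equal (fmap RA) (eq_sym (eps_nat adjB psiG))). rw Kt_r.
  rw (f_equal (fmap RA) (triL adjB Y)). reflexivity.
Qed.

Lemma KLn_r : fmap RA (fmap NB (fmap RB (fmap NA nG))) ∘ rG = fmap RA (fmap NB s) ∘ nG.
Proof.
  rewrite NnG. rw Kt_r. rw (f_equal (fun g => fmap RA (fmap NB g)) s_eta). reflexivity.
Qed.

Lemma tbar_mu : epsA (NB (RB (NA (RA (NB Y))))) ∘ fmap NA (tau Y) ∘ mu = fmap NB s.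
Proof.
  pose proof mu_cu as E. unfold mu in *.
  rw (eq_sym (eps_nat adjB (fmap NA (tau Y)))). rw (f_equal (fmap NB) (sD_3 N)).
  rw (eps_nat adjB (fmap NA (fmap RA (fmap NB s)))). rw (eps_nat adjA (fmap NB s)). rw E. reflexivity.
Qed.

Lemma tau_n : tau Y ∘ nG = fmap RA (fmap NB s) ∘ nG.
Proof.
  rewrite <- tbar_mu. rw nG_1. rw (eq_sym (eta_nat adjA (tau Y))). rw (triR adjA (NB (RB (NA (RA (NB Y)))))). reflexivity.
Qed.

Lemma rG_3 : tau (RB (NA GYo)) ∘ rG = fmap RA (fmap NB (fmap RB (fmap NA rG))) ∘ rG.
Proof.
  apply (linv_mono (fmap_linv RA (fmap_linv NB (fmap_linv RB (fmap_linv NA (fmap_linv RA (fmap_linv NB (fmap_linv RB phiG_psiG)))))))).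
  rw (eq_sym (tau_nat (fmap RB psiG))). rw Kt_r. rw (tau_nat (etaB Y)). rw tau_n.
  rw (f_equal (fun g => fmap RA (fmap NB (fmap RB (fmap NA g)))) Kt_r). rw KLn_r. reflexivity.
Qed.

Definition GO : CC := mkC rG_2 rG_3.
End GObj.

Section GMor.
Context (N N' : DD) (g : ComoduleHom N N').
Local Notation g0 := (proj1_sig g).

Lemma mu_nat : mu N' ∘ fmap NB g0 = fmap NA (fmap RA (fmap NB g0)) ∘ mu N.
Proof.
  unfold mu. rw (f_equal (fmap NB) (homD_r g)).
  rw (eps_nat adjB (fmap NA (fmap RA (fmap NB g0)))). reflexivity.
Qed.

Lemma Gg_ok : fmap RA (mu N') ∘ (fmap RA (fmap NB g0) ∘ nG N)
  = etaA (RA (NB (cm_ob N'))) ∘ (fmap RA (fmap NB g0) ∘ nG N).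
Proof.
  rw (f_equal (fmap RA) mu_nat). rw (nG_1 N). rw (eq_sym (eta_nat adjA (fmap RA (fmap NB g0)))). reflexivity.
Qed.

Definition Gm : hom (GYo N) (GYo N') := efac (nG_eq N') Gg_ok.
Lemma Gm_spec : nG N' ∘ Gm = fmap RA (fmap NB g0) ∘ nG N.
Proof. apply efac_spec. Qed.

Lemma psiG_nat : psiG N' ∘ fmap NA Gm = fmap NB g0 ∘ psiG N.
Proof.
  rewrite !psiG_def. rw (f_equal (fmap NA) Gm_spec). rw (eps_nat adjA (fmap NB g0)). reflexivity.
Qed.

Lemma Gm_hom : rG N' ∘ Gm = fmap RA (fmap NB (fmap RB (fmap NA Gm))) ∘ rG N.
Proof.
  apply (linv_mono (fmap_linv RA (fmap_linv NB (fmap_linv RB (phiG_psiG N'))))).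
  rw (Kt_r N'). rw Gm_spec.
  rw (f_equal (fun h => fmap RA (fmap NB (fmap RB h))) psiG_nat). rw (Kt_r N).
  rw (f_equal (fun h => fmap RA (fmap NB h)) (eq_sym (eta_nat adjB g0))). reflexivity.
Qed.

Definition GmH : ComoduleHom (GO N) (GO N').
Proof.
  exists Gm. apply homC. unfold GO. rewrite !rC_mkC. exact Gm_hom.
Defined.
End GMor.

Definition GG : Functor (ComoduleCat D DeltaD epsD) (ComoduleCat C DeltaC epsC).
Proof.
  refine (@Build_Functor (ComoduleCat D DeltaD epsD) (ComoduleCat C DeltaC epsC) GO (fun N N2 g => GmH g) _ _).
  - intros N. apply comodule_hom_eq. cbn. symmetry. apply efac_uniq. cbn. normid. reflexivity.
  - intros N1 N2 N3 g f. apply comodule_hom_eq. cbn. symmetry. apply efac_uniq.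
    unfold cm_comp; cbn. rw (Gm_spec g). rw (Gm_spec f). reflexivity.
Defined.

Lemma iso_hom {X0 : Category} {K0 : Functor X0 X0} {De : NatTrans K0 (Fcomp K0 K0)} {ep : NatTrans K0 (Fid X0)}
  (P Q : Comodule De ep) (f : hom (cm_ob P) (cm_ob Q)) (g : hom (cm_ob Q) (cm_ob P)) :
  cm_coact Q ∘ f = fmap K0 f ∘ cm_coact P -> g ∘ f = idm _ -> f ∘ g = idm _ ->
  cm_coact P ∘ g = fmap K0 g ∘ cm_coact Q.
Proof.
  intros Hf H1 H2.
  transitivity (fmap K0 g ∘ (fmap K0 f ∘ (cm_coact P ∘ g))).
  - rw (fmap_linv K0 H1). reflexivity.
  - rw (eq_sym Hf). rw H2. reflexivity.
Qed.

Section Unit.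
Context (M : CC).
Local Notation X := (cm_ob M).
Local Notation FM := (FO M).

Lemma mu_F : fmap NA (fmap RA (psiF M)) ∘ mu FM = fmap NA (etaA X) ∘ psiF M.
Proof.
  unfold mu, FO. rewrite sD_mkD.
  rw (eq_sym (eps_nat adjB (fmap NA (fmap RA (psiF M))))). rw (f_equal (fmap NB) (Lt_s M)).
  rw (eps_nat adjB (fmap NA (etaA X))). rewrite psiF_def. reflexivity.
Qed.

Lemma mu_phi : mu FM ∘ phiF M = fmap NA (fmap RA (phiF M)) ∘ fmap NA (etaA X).
Proof.
  transitivity (fmap NA (fmap RA (phiF M)) ∘ fmap NA (fmap RA (psiF M)) ∘ mu FM ∘ phiF M).
  - rewrite <- (fmap_comp NA), <- (fmap_comp RA), phiF_psiF, !fmap_id, cmp_id_l; reflexivity.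
  - rewrite <- (cmp_assoc _ (fmap NA (fmap RA (psiF M)))). rewrite mu_F. nrm. rw (psiF_phiF M). reflexivity.
Qed.

Lemma u_ok : fmap RA (mu FM) ∘ (fmap RA (phiF M) ∘ etaA X) = etaA (RA (NB (cm_ob FM))) ∘ (fmap RA (phiF M) ∘ etaA X).
Proof.
  rw (f_equal (fmap RA) mu_phi). rw (eq_sym (eta_nat adjA (etaA X))). rw (eq_sym (eta_nat adjA (fmap RA (phiF M)))). reflexivity.
Qed.

Definition uC : hom X (GYo FM) := efac (nG_eq FM) u_ok.
Lemma uC_spec : nG FM ∘ uC = fmap RA (phiF M) ∘ etaA X.
Proof. apply efac_spec. Qed.

Lemma v_ok : fmap RA (fmap NA (etaA X)) ∘ (fmap RA (psiF M) ∘ nG FM) = etaA (RA (NA X)) ∘ (fmap RA (psiF M) ∘ nG FM).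
Proof.
  rw (f_equal (fmap RA) (eq_sym mu_F)). rw (nG_1 FM). rw (eq_sym (eta_nat adjA (fmap RA (psiF M)))). reflexivity.
Qed.

Definition vC : hom (GYo FM) X := efac (etaA_can X) v_ok.
Lemma vC_spec : etaA X ∘ vC = fmap RA (psiF M) ∘ nG FM.
Proof. apply efac_spec. Qed.

Lemma vu : vC ∘ uC = idm X.
Proof.
  apply (etaA_mono (x:=X)). rw vC_spec. rw uC_spec. rw (f_equal (fmap RA) (psiF_phiF M)). reflexivity.
Qed.

Lemma uv : uC ∘ vC = idm (GYo FM).
Proof.
  apply (eq_mono (nG_eq FM)). rw uC_spec. rw vC_spec. rw (f_equal (fmap RA) (phiF_psiF M)). reflexivity.
Qed.

Lemma psiG_u : psiG FM ∘ fmap NA uC = phiF M.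
Proof.
  rewrite psiG_def. rw (f_equal (fmap NA) uC_spec). rw (eps_nat adjA (phiF M)). rw (triL adjA X). reflexivity.
Qed.

Lemma uC_hom : rC (GO FM) ∘ uC = fmap RA (fmap NB (fmap RB (fmap NA uC))) ∘ rC M.
Proof.
  unfold GO. rewrite rC_mkC.
  apply (linv_mono (fmap_linv RA (fmap_linv NB (fmap_linv RB (phiG_psiG FM))))).
  rw (Kt_r FM). rw uC_spec. rw (f_equal (fun h => fmap RA (fmap NB (fmap RB h))) psiG_u).
  apply (linv_mono (fmap_linv RA (fmap_linv NB (fmap_linv RB (phiF_psiF M))))).
  rw (f_equal (fun h => fmap RA (fmap NB h)) (RBpsi_eta M)).
  rw (f_equal (fmap RA) (NmF_phi M)). rw (nu_eta M).
  rw (f_equal (fun h => fmap RA (fmap NB (fmap RB h))) (psiF_phiF M)). reflexivity.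
Qed.
End Unit.

Lemma phi_nat (M M' : CC) (f : ComoduleHom M M') :
  fmap NB (Fm f) ∘ phiF M = phiF M' ∘ fmap NA (proj1_sig f).
Proof.
  apply (linv_mono (phiF_psiF M')).
  rw (psi_nat f). rw (psiF_phiF M). rw (psiF_phiF M'). reflexivity.
Qed.

Lemma uC_nat (M M' : CC) (f : ComoduleHom M M') :
  Gm (FmH f) ∘ uC M = uC M' ∘ proj1_sig f.
Proof.
  apply (eq_mono (nG_eq (FO M'))).
  rw (Gm_spec (FmH f)). cbn. rw (uC_spec M). rw (uC_spec M').
  rw (eta_nat adjA (proj1_sig f)). rw (f_equal (fmap RA) (eq_sym (phi_nat f))). reflexivity.
Qed.

Section Counit.
Context (N : DD).
Local Notation Y := (cm_ob N).
Local Notation GN := (GO N).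

Lemma nu_G : fmap NB (fmap RB (psiG N)) ∘ nu GN = fmap NB (etaB Y) ∘ psiG N.
Proof.
  unfold nu, GO. rewrite rC_mkC.
  rw (eq_sym (eps_nat adjA (fmap NB (fmap RB (psiG N))))). rw (f_equal (fmap NA) (Kt_r N)).
  rw (eps_nat adjA (fmap NB (etaB Y))). rewrite psiG_def. reflexivity.
Qed.

Lemma nu_phiG : nu GN ∘ phiG N = fmap NB (fmap RB (phiG N)) ∘ fmap NB (etaB Y).
Proof.
  transitivity (fmap NB (fmap RB (phiG N)) ∘ fmap NB (fmap RB (psiG N)) ∘ nu GN ∘ phiG N).
  - rewrite <- (fmap_comp NB), <- (fmap_comp RB), phiG_psiG, !fmap_id, cmp_id_l; reflexivity.
  - rewrite <- (cmp_assoc _ (fmap NB (fmap RB (psiG N)))). rewrite nu_G. nrm. rw (psiG_phiG N). reflexivity.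
Qed.

Lemma c_ok : fmap RB (fmap NB (etaB Y)) ∘ (fmap RB (psiG N) ∘ mF GN) = etaB (RB (NB Y)) ∘ (fmap RB (psiG N) ∘ mF GN).
Proof.
  rw (f_equal (fmap RB) (eq_sym nu_G)). rw (mF_1 GN). rw (eq_sym (eta_nat adjB (fmap RB (psiG N)))). reflexivity.
Qed.

Definition cD : hom (FXo GN) Y := efac (etaB_can Y) c_ok.
Lemma cD_spec : etaB Y ∘ cD = fmap RB (psiG N) ∘ mF GN.
Proof. apply efac_spec. Qed.

Lemma d_ok : fmap RB (nu GN) ∘ (fmap RB (phiG N) ∘ etaB Y) = etaB (RB (NA (cm_ob GN))) ∘ (fmap RB (phiG N) ∘ etaB Y).
Proof.
  rw (f_equal (fmap RB) nu_phiG). rw (eq_sym (eta_nat adjB (etaB Y))). rw (eq_sym (eta_nat adjB (fmap RB (phiG N)))). reflexivity.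
Qed.

Definition dD : hom Y (FXo GN) := efac (mF_eq GN) d_ok.
Lemma dD_spec : mF GN ∘ dD = fmap RB (phiG N) ∘ etaB Y.
Proof. apply efac_spec. Qed.

Lemma cd : cD ∘ dD = idm Y.
Proof.
  apply (etaB_mono (x:=Y)). rw cD_spec. rw dD_spec. rw (f_equal (fmap RB) (psiG_phiG N)). reflexivity.
Qed.

Lemma dc : dD ∘ cD = idm (FXo GN).
Proof.
  apply (eq_mono (mF_eq GN)). rw dD_spec. rw cD_spec. rw (f_equal (fmap RB) (phiG_psiG N)). reflexivity.
Qed.

Lemma psiF_d : psiF GN ∘ fmap NB dD = phiG N.
Proof.
  rewrite psiF_def. rw (f_equal (fmap NB) dD_spec). rw (eps_nat adjB (phiG N)). rw (triL adjB Y). reflexivity.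
Qed.

Lemma dD_hom : sD (FO GN) ∘ dD = fmap RB (fmap NA (fmap RA (fmap NB dD))) ∘ sD N.
Proof.
  unfold FO. rewrite sD_mkD.
  apply (linv_mono (fmap_linv RB (fmap_linv NA (fmap_linv RA (phiF_psiF GN))))).
  rw (Lt_s GN). rw dD_spec. rw (f_equal (fun h => fmap RB (fmap NA (fmap RA h))) psiF_d).
  apply (linv_mono (fmap_linv RB (fmap_linv NA (fmap_linv RA (phiG_psiG N))))).
  rw (f_equal (fun h => fmap RB (fmap NA h)) (RApsi_eta N)).
  rw (f_equal (fmap RB) (NnG_phi N)). rw (s_eta N).
  rw (f_equal (fun h => fmap RB (fmap NA (fmap RA h))) (psiG_phiG N)). reflexivity.
Qed.
End Counit.

Lemma cD_nat (N N' : DD) (g : ComoduleHom N N') :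
  proj1_sig g ∘ cD N = cD N' ∘ Fm (GmH g).
Proof.
  apply (etaB_mono (x:=cm_ob N')).
  rw (eta_nat adjB (proj1_sig g)). rw (cD_spec N). rw (cD_spec N'). rw (Fm_spec (GmH g)). cbn.
  rw (f_equal (fmap RB) (psiG_nat g)). reflexivity.
Qed.

Definition uH (M : CC) : ComoduleHom M (GO (FO M)) :=
  exist _ (uC M) (homC (uC_hom M)).

Definition uNT : NatTrans (Fid (ComoduleCat C DeltaC epsC)) (Fcomp GG FF).
Proof.
  refine (@Build_NatTrans _ _ (Fid (ComoduleCat C DeltaC epsC)) (Fcomp GG FF) uH _).
  intros M M' f. apply comodule_hom_eq. unfold cm_comp; cbn. symmetry. apply uC_nat.
Defined.

Definition cH (N : DD) : ComoduleHom (FO (GO N)) N :=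
  exist _ (cD N) (iso_hom (homD (dD_hom N)) (cd N) (dc N)).

Definition cNT : NatTrans (Fcomp FF GG) (Fid (ComoduleCat D DeltaD epsD)).
Proof.
  refine (@Build_NatTrans _ _ (Fcomp FF GG) (Fid (ComoduleCat D DeltaD epsD)) cH _).
  intros N N' g. apply comodule_hom_eq. unfold cm_comp; cbn. symmetry. apply cD_nat.
Defined.

Lemma main_equiv : EquivalentCats (ComoduleCat C DeltaC epsC) (ComoduleCat D DeltaD epsD).
Proof.
  exists FF, GG, uNT, cNT. split.
  - intros M. cbn.
    exists (exist _ (vC M) (iso_hom (homC (uC_hom M)) (vu M) (uv M))).
    split; apply comodule_hom_eq; cbn; [apply vu | apply uv].
  - intros N. cbn.
    exists (exist _ (dD N) (homD (dD_hom N))).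
    split; apply comodule_hom_eq; cbn; [apply dc | apply cd].
Qed.

End Main.

Theorem mainTheorem4 (A B T : Category)
  (HeqA : HasEqualizers A) (HeqB : HasEqualizers B)
  (adjA : Adjunction A T) (adjB : Adjunction B T)
  (tau : TauType adjA adjB) (Htau : IsRegularPreTorsor adjA adjB tau)
  (C : Functor A A) (i : NatTrans C (PhiA adjA adjB))
  (Hi : IsEqualizerNT i (omega_l adjA adjB tau) (omega_r adjA adjB))
  (DeltaC : NatTrans C (Fcomp C C)) (epsC : NatTrans C (Fid A))
  (HC : ComonadDataC adjA adjB tau i DeltaC epsC)
  (D : Functor B B) (j : NatTrans D (PhiB adjA adjB))
  (Hj : IsEqualizerNT j (theta_l adjA adjB tau) (theta_r adjA adjB))
  (DeltaD : NatTrans D (Fcomp D D)) (epsD : NatTrans D (Fid B))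
  (HD : ComonadDataD adjA adjB tau j DeltaD epsD) :
  EquivalentCats (ComoduleCat C DeltaC epsC) (ComoduleCat D DeltaD epsD).
Proof.
  exact (@main_equiv A B T HeqA HeqB adjA adjB tau Htau C i Hi DeltaC epsC HC D j Hj DeltaD epsD HD).
Qed.
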